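(* Let $\Pi$ be a non-negative projector on $\mathcal{Q}^n$ of rank $q$. Then there exist non-negative states $|\psi_1\rangle,\ldots,|\psi_q\rangle$ such that $\langle\psi_a|\psi_b\rangle=\delta_{a,b}$ for all $a,b$ and $\Pi=\sum_{a=1}^q|\psi_a\rangle\langle\psi_a|$.
   Context: $\mathcal{Q}^n=(\mathbb{C}^2)^{\otimes n}$ with standard basis $\{|x\rangle\}$, $x\in\{0,1\}^n$. A non-negative projector is a Hermitian projector on $\mathcal{Q}^n$ whose matrix in the standard basis has only real non-negative entries. A non-negative state is a normalized vector in $\mathcal{Q}^n$ all of whose amplitudes in the standard basis are real and non-negative. *)

(* Defs.v *)
From mathcomp Require Import all_boot all_order all_algebra.
Set Implicit Arguments. Unset Strict Implicit. Unset Printing Implicit Defensive.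
Import Order.TTheory GRing.Theory Num.Theory.
Local Open Scope ring_scope.

(* Operators / vectors on Q^n = (C^2)^{⊗ n}, represented in the standard basis
   as (2^n)x(2^n) matrices / 2^n column vectors over a numeric closed field C
   (e.g. the complex numbers). *)

Definition adj_mx (C : numClosedFieldType) m n (A : 'M[C]_(m, n)) : 'M[C]_(n, m) :=
  (map_mx Num.conj A)^T.

Definition hermitian (C : numClosedFieldType) n (A : 'M[C]_n) : Prop :=
  adj_mx A = A.

Definition projector (C : numClosedFieldType) n (A : 'M[C]_n) : Prop :=
  hermitian A /\ A *m A = A.

(* all entries real and non-negative (0 <= x in a numClosedField forces x real) *)
Definition nonneg_mx (C : numClosedFieldType) m n (A : 'M[C]_(m, n)) : Prop :=
  forall i j, 0 <= A i j.

Definition nonneg_projector (C : numClosedFieldType) (n : nat) (P : 'M[C]_(2 ^ n)) : Prop :=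
  projector P /\ nonneg_mx P.

Definition braket (C : numClosedFieldType) m (u v : 'cV[C]_m) : C :=
  (adj_mx u *m v) 0 0.

Definition nonneg_state (C : numClosedFieldType) (n : nat) (psi : 'cV[C]_(2 ^ n)) : Prop :=
  nonneg_mx psi /\ braket psi psi = 1.

(* Main.v *)
Require Import Defs.
From mathcomp Require Import all_boot all_order all_algebra.
Import Order.TTheory.
Import GRing.Theory Num.Theory.
Local Open Scope ring_scope.

Definition NP {C : numClosedFieldType} {N : nat} (P : 'M[C]_N) :=
  [/\ P *m P = P, (forall i j, P i j = P j i) & (forall i j, 0 <= P i j)].

Lemma np_mul {C : numClosedFieldType} {N : nat} (P : 'M[C]_N) i j :
  NP P -> P i j = \sum_l P i l * P l j.
Proof. by case=> HP _ _; rewrite -{1}HP mxE. Qed.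

Lemma np_trans {C : numClosedFieldType} {N : nat} (P : 'M[C]_N) i l j :
  NP P -> P i l * P l j <= P i j.
Proof.
move=> H; rewrite (np_mul _ i j H) (bigD1 l) //= lerDl.
case: H => _ _ Hn; apply: sumr_ge0 => k _; exact: mulr_ge0.
Qed.

Lemma np_pos {C : numClosedFieldType} {N : nat} (P : 'M[C]_N) i l j :
  NP P -> 0 < P i l -> 0 < P l j -> 0 < P i j.
Proof. by move=> H a b; apply: lt_le_trans (np_trans _ i l j H); apply: mulr_gt0. Qed.

Lemma np_row0 {C : numClosedFieldType} {N : nat} (P : 'M[C]_N) i j :
  NP P -> P i i = 0 -> P i j = 0.
Proof.
move=> H; rewrite (np_mul _ i i H); case: H => _ Hs' Hn.
move=> /psumr_eq0P Hs.
have /Hs /(_ j isT) /eqP : forall k, true -> 0 <= P i k * P k i.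
  by move=> k _; rewrite mulr_ge0.
by rewrite (Hs' j i) -expr2 sqrf_eq0 => /eqP.
Qed.

Lemma np_core {C : numClosedFieldType} {N : nat} (P : 'M[C]_N) (x : 'cV[C]_N) k j :
  NP P -> P *m x = x -> x k 0 = 0 -> 0 < P k j -> x j 0 = 0.
Proof.
move=> H Hx Hk Hkj; have [HP Hs Hn] := H.
set a : 'cV[C]_N := \col_i `|x i 0|.
set b := P *m a.
have bi i : b i 0 = \sum_l P i l * `|x l 0|.
  by rewrite mxE; apply: eq_bigr => l _; rewrite mxE.
have ai i : a i 0 = `|x i 0| by rewrite mxE.
have dge i : a i 0 <= b i 0.
  rewrite ai bi -{1}Hx mxE; apply: le_trans (ler_norm_sum _ _ _) _.
  by apply: ler_sum => l _; rewrite normrM ger0_norm.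
have a0 i : 0 <= a i 0 by rewrite ai normr_ge0.
have Ptr : P^T = P by apply/matrixP => i l; rewrite mxE Hs.
have eq1 : (b^T *m b) 0 0 = (a^T *m b) 0 0.
  by rewrite /b trmx_mul Ptr -mulmxA (mulmxA P) HP.
have : \sum_i (b i 0 - a i 0) * b i 0 = 0.
  move: eq1; rewrite !mxE => e.
  under eq_bigr => i _ do rewrite mulrBl.
  rewrite sumrB; apply/eqP; rewrite subr_eq0; apply/eqP.
  have e1 : \sum_j b^T 0 j * b j 0 = \sum_i b i 0 * b i 0.
    by apply: eq_bigr => i _; rewrite mxE.
  have e2 : \sum_j a^T 0 j * b j 0 = \sum_i a i 0 * b i 0.
    by apply: eq_bigr => i _; rewrite mxE.
  by rewrite -e1 -e2.
move=> /psumr_eq0P Hz.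
have ab i : a i 0 = b i 0.
  have : (b i 0 - a i 0) * b i 0 = 0.
    apply: Hz => // l _; apply: mulr_ge0; first by rewrite subr_ge0.
    exact: le_trans (dge l).
  move/eqP; rewrite mulf_eq0 subr_eq0 => /orP [/eqP -> //|/eqP b0].
  by apply/eqP; rewrite b0 eq_le andbC a0 /=; have := dge i; rewrite b0.
have := ab k; rewrite bi ai Hk normr0 => /esym /psumr_eq0P Hz2.
have /Hz2 : forall l, true -> 0 <= P k l * `|x l 0| by move=> l _; rewrite mulr_ge0.
move=> /(_ j isT) /eqP; rewrite mulf_eq0 normr_eq0 (gt_eqF Hkj) /=.
by move/eqP.
Qed.

Definition repset {C : numClosedFieldType} {N : nat} (P : 'M[C]_N) : {set 'I_N} :=
  [set k | (0 < P k k) && [forall j : 'I_N, (j < k)%N ==> (P j k == 0)]].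

Lemma np_posE {C : numClosedFieldType} {N : nat} (P : 'M[C]_N) i j :
  NP P -> (0 < P i j) = (P i j != 0).
Proof. by case=> _ _ Hn; rewrite lt0r Hn andbT. Qed.

Lemma np_zero {C : numClosedFieldType} {N : nat} (P : 'M[C]_N) i j :
  NP P -> (0 < P i j -> False) -> P i j = 0.
Proof. by move=> H Hf; have [//|ne] := eqVneq (P i j) 0; exfalso; apply: Hf; rewrite np_posE. Qed.

Lemma rep_orth {C : numClosedFieldType} {N : nat} (P : 'M[C]_N) k l :
  NP P -> k \in repset P -> l \in repset P -> k != l -> P k l = 0.
Proof.
move=> [HP Hs Hn]; rewrite !inE => /andP [_ /forallP Hk] /andP [_ /forallP Hl] kl.
case: (ltngtP k l) => [lt|lt|/val_inj e]; last by rewrite e eqxx in kl.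
- by apply/eqP; move: (Hl k); rewrite lt.
- by rewrite Hs; apply/eqP; move: (Hk l); rewrite lt.
Qed.

Lemma np_entry {C : numClosedFieldType} {N : nat} (P : 'M[C]_N) i j :
  NP P -> P i j = \sum_(k in repset P) P i k * P j k / P k k.
Proof.
move=> H; have [HP Hs Hn] := H.
have [Hii|Hii] := eqVneq (P i i) 0.
  rewrite (np_row0 _ i j H Hii) big1 // => k _.
  by rewrite (np_row0 _ i k H Hii) !mul0r.
have Hpi : 0 < P i i by rewrite np_posE.
pose k := [arg min_(k < i | 0 < P k i) (k : nat)].
have [Hk'i Hmin] : 0 < P k i /\ forall j0, 0 < P j0 i -> (k <= j0)%N.
  by rewrite /k; case: arg_minnP => // k1 Hk1 Hm; split=> // j0 /Hm.
have Hik : 0 < P i k by rewrite Hs.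
have Hkk : 0 < P k k := np_pos _ k i k H Hk'i Hik.
have kR : k \in repset P.
  rewrite inE Hkk /=; apply/forallP => j0; apply/implyP => jk.
  apply/eqP; apply: (np_zero _ _ _ H) => Hjk.
  by have := Hmin j0 (np_pos _ j0 k i H Hjk Hk'i); rewrite leqNgt jk.
rewrite (bigD1 k) //= big1 ?addr0; last first.
  move=> l /andP [lR lk]; suff -> : P i l = 0 by rewrite !mul0r.
  apply: (np_zero _ _ _ H) => Hil.
  have := np_pos _ k i l H Hk'i Hil; rewrite np_posE //.
  by rewrite (rep_orth _ k l H kR lR) ?eqxx // eq_sym.
apply: (mulIf (lt0r_neq0 Hkk)); rewrite mulfVK ?(lt0r_neq0 Hkk) //.
have [Hkj|Hkj] := eqVneq (P k j) 0.
  have -> : P i j = 0.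
    apply: (np_zero _ _ _ H) => Hij.
    by have := np_pos _ k i j H Hk'i Hij; rewrite np_posE // Hkj eqxx.
  by rewrite mul0r (Hs j k) Hkj mulr0.
pose x : 'cV[C]_N := \col_t (P k k * P t i - P i k * P t k).
have Px : P *m x = x.
  apply/matrixP => t z; rewrite (ord1 z) !mxE.
  under eq_bigr => l _ do rewrite mxE mulrBr mulrCA (mulrCA (P t l)).
  by rewrite sumrB -!mulr_sumr -!np_mul.
have xk : x k 0 = 0 by rewrite mxE (Hs k i) mulrC subrr.
have := np_core _ x k j H Px xk; rewrite np_posE // Hkj => /(_ isT).
rewrite mxE => /eqP; rewrite subr_eq0 => /eqP e.
by rewrite mulrC Hs e (Hs j k).
Qed.

Lemma braket_nn {C : numClosedFieldType} {N : nat} (u v : 'cV[C]_N) :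
  nonneg_mx u -> braket u v = \sum_i u i 0 * v i 0.
Proof.
move=> Hu; rewrite /braket /adj_mx mxE; apply: eq_bigr => i _.
by rewrite !mxE conj_Creal // ger0_real.
Qed.

Lemma nnproj_NP {C : numClosedFieldType} (n : nat) (P : 'M[C]_(2 ^ n)) :
  nonneg_projector P -> NP P.
Proof.
move=> [[Hh HP] Hn]; split => // i j.
have := congr1 (fun M : 'M[C]_(2 ^ n) => M i j) (Hh : adj_mx P = P); rewrite /= /adj_mx !mxE => <-.
by rewrite conj_Creal // ger0_real.
Qed.

Theorem lemma4p2 (C : numClosedFieldType) (n q : nat) (P : 'M[C]_(2 ^ n)) :
  nonneg_projector P -> \rank P = q ->
  exists psi : 'I_q -> 'cV[C]_(2 ^ n),
    (forall a, nonneg_state (psi a)) /\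
    (forall a b, braket (psi a) (psi b) = (a == b)%:R) /\
    P = \sum_(a < q) (psi a *m adj_mx (psi a)).
Proof.
move=> HnP Hrank; have H := nnproj_NP n P HnP; have [HP Hs Hn] := H.
set R := repset P.
pose s k := sqrtC (P k k).
pose psi (a : 'I_#|R|) : 'cV[C]_(2 ^ n) :=
  \col_i (P i (enum_val a) / s (enum_val a)).
have Rpos k : k \in R -> 0 < P k k by rewrite inE => /andP [].
have spos k : k \in R -> 0 < s k by move/Rpos; rewrite /s sqrtC_gt0.
have ss k : s k * s k = P k k by rewrite -expr2 sqrtCK.
have nn a : nonneg_mx (psi a).
  move=> i j; rewrite !mxE divr_ge0 // /s sqrtC_ge0 //.
have bk a b : braket (psi a) (psi b) = (a == b)%:R.
  rewrite braket_nn //.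
  under eq_bigr => i _ do rewrite !mxE mulrACA (Hs i (enum_val a)).
  rewrite -mulr_suml -np_mul //.
  have [<-|ab] := eqVneq a b.
    rewrite -invfM ss divff //; apply: lt0r_neq0; exact: Rpos (enum_valP a).
  rewrite (rep_orth _ _ _ H (enum_valP a) (enum_valP b)) ?mul0r //.
  by apply: contra ab => /eqP /enum_val_inj ->.
have E i j : P i j = \sum_a psi a i 0 * psi a j 0.
  rewrite (np_entry _ i j H) (big_enum_val (fun k => P i k * P j k / P k k)).
  apply: eq_bigr => a _; rewrite !mxE mulrACA -invfM ss.
  by [].
clearbody psi.
have cj a i : (psi a i 0)^* = psi a i 0 by rewrite conj_Creal // ger0_real // nn.
pose Psi : 'M[C]_(2 ^ n, #|R|) := \matrix_(i, a) psi a i 0.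
have PE : P = Psi *m adj_mx Psi.
  apply/matrixP => i j; rewrite E !mxE; apply: eq_bigr => a _; rewrite /adj_mx.
  by rewrite !mxE cj.
have PsiE : adj_mx Psi *m Psi = 1%:M.
  apply/matrixP => a b; rewrite !mxE -bk /braket /adj_mx mxE.
  by apply: eq_bigr => i _; rewrite !mxE.
have rk : \rank P = #|R|.
  apply/eqP; rewrite eqn_leq; apply/andP; split.
    by rewrite PE; apply: leq_trans (mxrankM_maxl _ _) (rank_leq_col _).
  have -> : #|R| = \rank (adj_mx Psi *m P *m Psi).
    by rewrite PE mulmxA PsiE mul1mx PsiE mxrank1.
  by apply: leq_trans (mxrankM_maxl _ _) (mxrankM_maxr _ _).
subst q; rewrite rk; exists psi; split; [|split] => //.
- by move=> a; split => //; rewrite bk eqxx.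
- apply/matrixP => i j; rewrite E summxE; apply: eq_bigr => a _.
  by rewrite mxE big_ord1 !mxE cj.
Qed.
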